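(* Let $Z_i=(X_i,Y_i)$, $i=1,\dots,n+1$, be i.i.d. from a distribution $\mathcal P_{XY}$ on $\mathbb R^p\times\mathbb R$ (calibration samples $Z_1,\dots,Z_n$ and test sample $Z_{n+1}$), and let $V(\cdot)$ be a fixed (non-random, data-independent) real-valued score function, $V_i=V(Z_i)$. Let $H:\mathbb R^p\times\mathbb R^p\to[0,1]$ be a localizer depending on the data only through the unordered set $\{X_1,\dots,X_{n+1}\}$, with $H(x,x)=1$; put $H_{ij}=H(X_i,X_j)$, $p^H_{ij}=H_{ij}/\sum_{k=1}^{n+1}H_{ik}$ and $\Gamma=\{\sum_{k\in I}p^H_{ik}: i\in\{1,\dots,n+1\},\ I\subseteq\{1,\dots,n+1\}\}$. For $v\in\mathbb R$ let $\hat{\mathcal F}_i(v)=\sum_{j=1}^{n}p^H_{ij}\delta_{V_j}+p^H_{i,n+1}\delta_v$ ($i=1,\dots,n+1$), and $\hat{\mathcal F}=\sum_{j=1}^{n}p^H_{n+1,j}\delta_{V_j}+p^H_{n+1,n+1}\delta_{+\infty}$. Fix $\alpha\in(0,1)$. For each $v$, let $\tilde\alpha(v)$ be the smallest $\tilde\alpha\in\Gamma$ such that $$\frac{1}{n+1}\sum_{i=1}^{n+1}\mathbb 1\{V_i\le Q(\tilde\alpha;\hat{\mathcal F}_i(v))\}\ge\alpha,$$ where in this sum $V_{n+1}$ is set equal to $v$. Set $C_V(X_{n+1})=\{v: v\le Q(\tilde\alpha(v);\hat{\mathcal F})\}$ and $C(X_{n+1})=\{y: V(X_{n+1},y)\in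 C_V(X_{n+1})\}$. Then $C_V(X_{n+1})$ is an interval, and $$\mathbb P\{V_{n+1}\in C_V(X_{n+1})\}\ge\alpha,\qquad \mathbb P\{Y_{n+1}\in C(X_{n+1})\}\ge\alpha.$$
   Context: For a distribution $\mathcal F$ on $\mathbb R\cup\{+\infty\}$, $Q(\alpha;\mathcal F)=\inf\{t:\mathbb P_{T\sim\mathcal F}(T\le t)\ge\alpha\}$; $\delta_v$ is the point mass at $v$. *)

(* Defs.v *)
From HB Require Import structures.
From mathcomp Require Import all_boot all_order all_algebra.
From mathcomp Require Import all_classical all_reals all_analysis.
Set Implicit Arguments. Unset Strict Implicit. Unset Printing Implicit Defensive.
Import Order.TTheory GRing.Theory Num.Theory.
Local Open Scope classical_set_scope.
Local Open Scope ring_scope.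

(** Mutual independence + identical distribution of a finite family of
    random variables Z i : Omega -> T (product rule over all families of
    measurable sets; taking A j = setT gives every subfamily). *)
Definition iid_family {d dT : measure_display} {R : realType}
  {Omega : measurableType d} (P : probability Omega R)
  {T : measurableType dT} (m : nat) (Z : 'I_m -> Omega -> T) : Prop :=
  (forall i, measurable_fun setT (Z i)) /\
  (forall A : 'I_m -> set T, (forall i, measurable (A i)) ->
     P (\bigcap_(i in setT) (Z i @^-1` A i)) =
     (\prod_(i < m) P (Z i @^-1` A i))%E) /\
  (forall i j (A : set T), measurable A ->
     P (Z i @^-1` A) = P (Z j @^-1` A)).

(** A finite discrete distribution on R ∪ {+oo} (extended reals), given by
    atoms a j with weights w j. Its c.d.f. and its quantile
    Q(beta; F) = inf { t : P_{T ~ F}(T <= t) >= beta }. *)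
Definition atoms_cdf {R : realType} (m : nat) (w : 'I_m -> R)
  (a : 'I_m -> \bar R) (t : \bar R) : R :=
  \sum_(j < m | (a j <= t)%E) w j.

Definition atoms_quantile {R : realType} (m : nat) (w : 'I_m -> R)
  (a : 'I_m -> \bar R) (beta : R) : \bar R :=
  ereal_inf [set t : \bar R | beta <= atoms_cdf w a t].

Section localized.
Context {R : realType} {p n : nat}.
(* indices 'I_n.+1 = {1,...,n+1} with ord_max the test point n+1 *)
Variable Hloc : ('I_n.+1 -> p.-tuple R) -> p.-tuple R -> p.-tuple R -> R.
Variable x : 'I_n.+1 -> p.-tuple R.
Variable Vs : 'I_n.+1 -> R.

Definition Hmat (i j : 'I_n.+1) : R := Hloc x (x i) (x j).

Definition pH (i j : 'I_n.+1) : R := Hmat i j / \sum_(k < n.+1) Hmat i k.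

Definition Gamma : set R :=
  [set g | exists (i : 'I_n.+1) (I : {set 'I_n.+1}), g = \sum_(k in I) pH i k].

(* hat F_i(v) = sum_{j<=n} p_ij delta_{V_j} + p_{i,n+1} delta_v *)
Definition Fi_atoms (v : R) (j : 'I_n.+1) : \bar R :=
  if j == ord_max then v%:E else (Vs j)%:E.

(* hat F = sum_{j<=n} p_{n+1,j} delta_{V_j} + p_{n+1,n+1} delta_{+oo} *)
Definition Fhat_atoms (j : 'I_n.+1) : \bar R :=
  if j == ord_max then +oo%E else (Vs j)%:E.

Definition Vrep (v : R) (i : 'I_n.+1) : R := if i == ord_max then v else Vs i.

Definition coverage (a v : R) : R :=
  n.+1%:R^-1 * \sum_(i < n.+1)
     (if ((Vrep v i)%:E <= atoms_quantile (pH i) (Fi_atoms v) a)%E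
      then 1 else 0).

(* smallest element of Gamma satisfying the coverage condition
   (Gamma is finite and the set is nonempty, so inf = min) *)
Definition alpha_tilde (alpha v : R) : R :=
  inf [set a | Gamma a /\ alpha <= coverage a v].

Definition C_V (alpha : R) : set R :=
  [set v | (v%:E <= atoms_quantile (pH ord_max) Fhat_atoms (alpha_tilde alpha v))%E].

End localized.

Definition C_Y {R : realType} {p n : nat}
  (Hloc : ('I_n.+1 -> p.-tuple R) -> p.-tuple R -> p.-tuple R -> R)
  (V : p.-tuple R * R -> R) (x : 'I_n.+1 -> p.-tuple R) (Vs : 'I_n.+1 -> R)
  (alpha : R) : set R :=
  [set y | C_V Hloc x Vs alpha (V (x ord_max, y))].

(* Main.v *)
Require Import Defs.
From HB Require Import structures.
From mathcomp Require Import all_boot all_order all_algebra.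
From mathcomp Require Import all_classical all_reals all_analysis.
From mathcomp Require Import measurable_realfun fingroup perm.
Import Order.TTheory GRing.Theory Num.Theory.
Local Open Scope classical_set_scope.
Local Open Scope ring_scope.
Set Implicit Arguments. Unset Strict Implicit. Unset Printing Implicit Defensive.
Lemma sum_sub_le (R : realType) m (w : 'I_m -> R) (P Q : pred 'I_m) :
  (forall j, 0 <= w j) -> (forall j, P j -> Q j) ->
  \sum_(j < m | P j) w j <= \sum_(j < m | Q j) w j.
Proof.
move=> w0 PQ; rewrite [X in X <= _]big_mkcond [X in _ <= X]big_mkcond /=.
apply: ler_sum => j _; case: ifP => Pj; first by rewrite PQ.
by case: ifP.
Qed.

Lemma Q_char (R : realType) m (w : 'I_m -> R) (a : 'I_m -> \bar R) (beta v : R) :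
  (forall j, 0 <= w j) ->
  (v%:E <= atoms_quantile w a beta)%E <-> \sum_(j < m | (a j < v%:E)%E) w j < beta.
Proof.
move=> w0; split.
- move=> hv; rewrite ltNge; apply/negP => hb.
  pose t := (\big[Order.max/-oo]_(j < m | (a j < v%:E)%E) a j)%E.
  have tv : (t < v%:E)%E.
    rewrite /t; elim/big_ind: _ => [|x y xv yv|j //].
    - by rewrite ltNyr.
    - by rewrite /Order.max; case: ifP.
  have tS : beta <= atoms_cdf w a t.
    apply: (le_trans hb); rewrite /atoms_cdf; apply: sum_sub_le => // j aj.
    by rewrite /t (bigmax_sup j).
  have := le_trans hv (ereal_inf_lbound tS).
  by rewrite leNgt tv.
- move=> hs; apply: le_ereal_inf_tmp => t /= tS.
  rewrite leNgt; apply/negP => tv.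
  have : atoms_cdf w a t < beta.
    apply: le_lt_trans hs; rewrite /atoms_cdf; apply: sum_sub_le => // j aj.
    exact: le_lt_trans aj tv.
  by rewrite ltNge tS.
Qed.

Definition Sf (R : realType) p n (Hloc : ('I_n.+1 -> p.-tuple R) -> p.-tuple R -> p.-tuple R -> R)
  (xs : 'I_n.+1 -> p.-tuple R) (vs : 'I_n.+1 -> R) (i : 'I_n.+1) : R :=
  \sum_(j < n.+1 | vs j < vs i) pH Hloc xs i j.

Definition gfun (R : realType) p n (Hloc : ('I_n.+1 -> p.-tuple R) -> p.-tuple R -> p.-tuple R -> R)
  (xs : 'I_n.+1 -> p.-tuple R) (k : 'I_n.+1 * {set 'I_n.+1}) : R :=
  \sum_(j in k.2) pH Hloc xs k.1 j.

Lemma rowsum_gt0 (R : realType) p n (Hloc : ('I_n.+1 -> p.-tuple R) -> p.-tuple R -> p.-tuple R -> R)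
  (hH01 : forall xs a b, 0 <= Hloc xs a b <= 1) (hH1 : forall xs a, Hloc xs a a = 1) xs i :
  0 < \sum_(k < n.+1) Hmat Hloc xs i k.
Proof.
rewrite (bigD1 i) //= {1}/Hmat hH1; apply: (lt_le_trans ltr01); rewrite lerDl.
by apply: sumr_ge0 => k _; have /andP[] := hH01 xs (xs i) (xs k).
Qed.

Lemma pH_ge0 (R : realType) p n (Hloc : ('I_n.+1 -> p.-tuple R) -> p.-tuple R -> p.-tuple R -> R)
  (hH01 : forall xs a b, 0 <= Hloc xs a b <= 1) xs i j : 0 <= pH Hloc xs i j.
Proof.
rewrite /pH; apply: divr_ge0; first by have /andP[] := hH01 xs (xs i) (xs j).
by apply: sumr_ge0 => k _; have /andP[] := hH01 xs (xs i) (xs k).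
Qed.

Lemma pH_sum1 (R : realType) p n (Hloc : ('I_n.+1 -> p.-tuple R) -> p.-tuple R -> p.-tuple R -> R)
  (hH01 : forall xs a b, 0 <= Hloc xs a b <= 1) (hH1 : forall xs a, Hloc xs a a = 1) xs i :
  \sum_(j < n.+1) pH Hloc xs i j = 1.
Proof.
rewrite /pH -mulr_suml divff //; exact/lt0r_neq0/rowsum_gt0.
Qed.

Lemma pH_diag_gt0 (R : realType) p n (Hloc : ('I_n.+1 -> p.-tuple R) -> p.-tuple R -> p.-tuple R -> R)
  (hH01 : forall xs a b, 0 <= Hloc xs a b <= 1) (hH1 : forall xs a, Hloc xs a a = 1) xs i :
  0 < pH Hloc xs i i.
Proof.
rewrite /pH {1}/Hmat hH1 mul1r invr_gt0; exact: rowsum_gt0.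
Qed.

Lemma Sf_lt1 (R : realType) p n (Hloc : ('I_n.+1 -> p.-tuple R) -> p.-tuple R -> p.-tuple R -> R)
  (hH01 : forall xs a b, 0 <= Hloc xs a b <= 1) (hH1 : forall xs a, Hloc xs a a = 1) xs vs i :
  Sf Hloc xs vs i < 1.
Proof.
rewrite -(pH_sum1 hH01 hH1 xs i) (bigD1 i) //=.
apply: (@le_lt_trans _ _ (\sum_(j < n.+1 | j != i) pH Hloc xs i j)).
  apply: sum_sub_le => [j|j ji]; first exact: pH_ge0.
  by apply/eqP => E; rewrite E ltxx in ji.
by rewrite ltrDr pH_diag_gt0.
Qed.
Lemma cov_full (R : realType) p n (Hloc : ('I_n.+1 -> p.-tuple R) -> p.-tuple R -> p.-tuple R -> R)
  (hH01 : forall xs a b, 0 <= Hloc xs a b <= 1) xs (vs : 'I_n.+1 -> R) a :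
  coverage Hloc xs vs a (vs ord_max) =
  n.+1%:R^-1 * \sum_(i < n.+1) (if Sf Hloc xs vs i < a then 1 else 0).
Proof.
rewrite /coverage; congr (_ * _); apply: eq_bigr => i _.
have -> : Vrep vs (vs ord_max) i = vs i by rewrite /Vrep; case: eqP => // ->.
have -> : Fi_atoms vs (vs ord_max) = fun j => (vs j)%:E.
  by apply: funext => j; rewrite /Fi_atoms; case: eqP => // ->.
have QC := @Q_char R n.+1 (pH Hloc xs i) (fun j => (vs j)%:E) a (vs i) (pH_ge0 hH01 xs i).
have E : \sum_(j < n.+1 | ((vs j)%:E < (vs i)%:E)%E) pH Hloc xs i j = Sf Hloc xs vs i.
  by apply: eq_bigl => j; rewrite lte_fin.
have -> : ((vs i)%:E <= atoms_quantile (pH Hloc xs i) (fun j => (vs j)%:E) a)%E = (Sf Hloc xs vs i < a).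
  by apply/idP/idP => [/QC|h]; [rewrite E | apply/QC; rewrite E].
by [].
Qed.

Lemma CV_full (R : realType) p n (Hloc : ('I_n.+1 -> p.-tuple R) -> p.-tuple R -> p.-tuple R -> R)
  (hH01 : forall xs a b, 0 <= Hloc xs a b <= 1) xs (vs : 'I_n.+1 -> R) alpha :
  C_V Hloc xs vs alpha (vs ord_max) <->
  Sf Hloc xs vs ord_max < alpha_tilde Hloc xs vs alpha (vs ord_max).
Proof.
have QC := @Q_char R n.+1 (pH Hloc xs ord_max) (Fhat_atoms vs)
  (alpha_tilde Hloc xs vs alpha (vs ord_max)) (vs ord_max) (pH_ge0 hH01 xs ord_max).
have E : \sum_(j < n.+1 | (Fhat_atoms vs j < (vs ord_max)%:E)%E) pH Hloc xs ord_max j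
   = Sf Hloc xs vs ord_max.
  apply: eq_bigl => j; rewrite /Fhat_atoms; case: eqP => [->|_]; last by rewrite lte_fin.
  by rewrite ltxx.
rewrite -E; exact: QC.
Qed.

Lemma Gamma_gfun (R : realType) p n (Hloc : ('I_n.+1 -> p.-tuple R) -> p.-tuple R -> p.-tuple R -> R)
  xs a : Gamma Hloc xs a <-> exists k, a = gfun Hloc xs k.
Proof.
by split => [[i [I ->]]|[[i I] ->]]; [exists (i, I) | exists i, I].
Qed.

Lemma sum1_ord (R : realType) m : \sum_(i < m) (1 : R) = m%:R.
Proof. by rewrite sumr_const card_ord. Qed.

Lemma at_char (R : realType) p n (Hloc : ('I_n.+1 -> p.-tuple R) -> p.-tuple R -> p.-tuple R -> R)
  (hH01 : forall xs a b, 0 <= Hloc xs a b <= 1) (hH1 : forall xs a, Hloc xs a a = 1)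
  alpha (halpha : alpha < 1) xs vs :
  exists k, alpha_tilde Hloc xs vs alpha (vs ord_max) = gfun Hloc xs k /\
    alpha <= coverage Hloc xs vs (gfun Hloc xs k) (vs ord_max) /\
    forall k', alpha <= coverage Hloc xs vs (gfun Hloc xs k') (vs ord_max) ->
      gfun Hloc xs k <= gfun Hloc xs k'.
Proof.
pose Pk := fun k => alpha <= coverage Hloc xs vs (gfun Hloc xs k) (vs ord_max).
have P0 : Pk (ord_max, [set: 'I_n.+1]%SET).
  rewrite /Pk cov_full // /gfun /=.
  rewrite (_ : \sum_(j in [set: 'I_n.+1]%SET) pH Hloc xs ord_max j = 1); last first.
    by rewrite -(pH_sum1 hH01 hH1 xs ord_max); apply: eq_bigl => j; rewrite !inE.
  rewrite (eq_bigr (fun=> 1)) => [|i _]; last by rewrite Sf_lt1.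
  rewrite sum1_ord mulVf //; exact: ltW.
case: (arg_minP (gfun Hloc xs) P0) => k Pk' kmin.
exists k; split; last by split.
rewrite /alpha_tilde; set A := [set a | _].
have Ak : A (gfun Hloc xs k) by split => //; apply/Gamma_gfun; exists k.
have lbA : lbound A (gfun Hloc xs k).
  by move=> a [/Gamma_gfun [k' ->] h]; exact: kmin.
apply/eqP; rewrite eq_le; apply/andP; split.
- by apply: ge_inf Ak; exists (gfun Hloc xs k).
- by apply: lb_le_inf lbA; exists (gfun Hloc xs k).
Qed.
Lemma CV_rep (R : realType) p n (Hloc : ('I_n.+1 -> p.-tuple R) -> p.-tuple R -> p.-tuple R -> R)
  xs (Vs : 'I_n.+1 -> R) alpha v :
  C_V Hloc xs Vs alpha v <-> C_V Hloc xs (Vrep Vs v) alpha (Vrep Vs v ord_max).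
Proof.
have e1 : Vrep Vs v ord_max = v by rewrite /Vrep eqxx.
rewrite e1.
have eF : Fhat_atoms (Vrep Vs v) = Fhat_atoms Vs.
  by apply: funext => j; rewrite /Fhat_atoms /Vrep; case: eqP.
have eC : forall a, coverage Hloc xs (Vrep Vs v) a v = coverage Hloc xs Vs a v.
  move=> a; rewrite /coverage.
  have -> : Vrep (Vrep Vs v) v = Vrep Vs v by apply: funext => j; rewrite /Vrep; case: eqP.
  have -> : Fi_atoms (Vrep Vs v) v = Fi_atoms Vs v.
    by apply: funext => j; rewrite /Fi_atoms /Vrep; case: eqP.
  by [].
have eA : alpha_tilde Hloc xs (Vrep Vs v) alpha v = alpha_tilde Hloc xs Vs alpha v.
  rewrite /alpha_tilde; congr (inf _); apply: funext => a /=; by rewrite eC.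
by rewrite /C_V /= eF eA.
Qed.

Lemma Sf_mono_other (R : realType) p n (Hloc : ('I_n.+1 -> p.-tuple R) -> p.-tuple R -> p.-tuple R -> R)
  (hH01 : forall xs a b, 0 <= Hloc xs a b <= 1) xs (Vs : 'I_n.+1 -> R) v2 v3 i :
  v2 <= v3 -> i != ord_max -> Sf Hloc xs (Vrep Vs v3) i <= Sf Hloc xs (Vrep Vs v2) i.
Proof.
move=> le23 ine; apply: sum_sub_le => [j|j]; first exact: pH_ge0.
rewrite /Vrep (negPf ine); case: eqP => // _ h; exact: le_lt_trans h.
Qed.

Lemma Sf_mono_last (R : realType) p n (Hloc : ('I_n.+1 -> p.-tuple R) -> p.-tuple R -> p.-tuple R -> R)
  (hH01 : forall xs a b, 0 <= Hloc xs a b <= 1) xs (Vs : 'I_n.+1 -> R) v2 v3 :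
  v2 <= v3 -> Sf Hloc xs (Vrep Vs v2) ord_max <= Sf Hloc xs (Vrep Vs v3) ord_max.
Proof.
move=> le23; apply: sum_sub_le => [j|j]; first exact: pH_ge0.
rewrite /Vrep eqxx; case: eqP => [_|_ h]; first by rewrite ltxx.
exact: lt_le_trans h le23.
Qed.

Lemma CV_down (R : realType) p n (Hloc : ('I_n.+1 -> p.-tuple R) -> p.-tuple R -> p.-tuple R -> R)
  (hH01 : forall xs a b, 0 <= Hloc xs a b <= 1) (hH1 : forall xs a, Hloc xs a a = 1)
  alpha (ha : alpha < 1) xs (Vs : 'I_n.+1 -> R) v2 v3 :
  v2 <= v3 -> C_V Hloc xs Vs alpha v3 -> C_V Hloc xs Vs alpha v2.
Proof.
move=> le23 /CV_rep /(CV_full hH01) h3; apply/CV_rep/(CV_full hH01).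
set vs2 := Vrep Vs v2 in h3 *; set vs3 := Vrep Vs v3 in h3 *.
rewrite ltNge; apply/negP => hge.
have [k2 [ea2 [c2 _]]] := at_char hH01 hH1 ha xs vs2.
have [k3 [ea3 [_ m3]]] := at_char hH01 hH1 ha xs vs3.
rewrite ea2 in hge; rewrite ea3 in h3.
have c3 : alpha <= coverage Hloc xs vs3 (gfun Hloc xs k2) (vs3 ord_max).
  apply: (le_trans c2); rewrite !cov_full //; apply: ler_wpM2l.
    by rewrite invr_ge0.
  apply: ler_sum => i _.
  case: (eqVneq i ord_max) => [->|ine].
    by rewrite ltNge hge /=; case: ifP.
  have M1 := Sf_mono_other hH01 xs Vs le23 ine.
  case: ifP => h; last by case: ifP.
  by rewrite (le_lt_trans M1 h).
have := m3 _ c3 => le32.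
have M2 := Sf_mono_last hH01 xs Vs le23.
have := lt_le_trans h3 (le_trans le32 (le_trans hge M2)).
by rewrite ltxx.
Qed.

Lemma CV_interval (R : realType) p n (Hloc : ('I_n.+1 -> p.-tuple R) -> p.-tuple R -> p.-tuple R -> R)
  (hH01 : forall xs a b, 0 <= Hloc xs a b <= 1) (hH1 : forall xs a, Hloc xs a a = 1)
  alpha (ha : alpha < 1) xs (Vs : 'I_n.+1 -> R) :
  is_interval (C_V Hloc xs Vs alpha).
Proof.
move=> x y _ Ey z /andP[_ zy]; exact: (CV_down hH01 hH1 ha zy Ey).
Qed.
Lemma perm_bijective n (s : {perm 'I_n.+1}) : bijective s.
Proof. by exists (s^-1)%g; [exact: permK | exact: permKV]. Qed.

Lemma pH_perm (R : realType) p n (Hloc : ('I_n.+1 -> p.-tuple R) -> p.-tuple R -> p.-tuple R -> R)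
  (hHsym : forall (s : 'I_n.+1 -> 'I_n.+1) (xs : 'I_n.+1 -> p.-tuple R),
      bijective s -> Hloc (xs \o s) = Hloc xs)
  (s : {perm 'I_n.+1}) xs i j :
  pH Hloc (xs \o s) i j = pH Hloc xs (s i) (s j).
Proof.
have HP : forall i j, Hmat Hloc (xs \o s) i j = Hmat Hloc xs (s i) (s j).
  by move=> i' j'; rewrite /Hmat (hHsym _ _ (perm_bijective s)).
rewrite /pH HP; congr (_ / _).
rewrite [RHS](reindex_inj (@perm_inj _ s)) /=.
by apply: eq_bigr => k _; rewrite HP.
Qed.

Lemma Sf_perm (R : realType) p n (Hloc : ('I_n.+1 -> p.-tuple R) -> p.-tuple R -> p.-tuple R -> R)
  (hHsym : forall (s : 'I_n.+1 -> 'I_n.+1) (xs : 'I_n.+1 -> p.-tuple R),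
      bijective s -> Hloc (xs \o s) = Hloc xs)
  (s : {perm 'I_n.+1}) xs (vs : 'I_n.+1 -> R) i :
  Sf Hloc (xs \o s) (vs \o s) i = Sf Hloc xs vs (s i).
Proof.
rewrite /Sf [RHS](reindex_inj (@perm_inj _ s)) /=.
by apply: eq_bigr => j _; rewrite (pH_perm hHsym).
Qed.

Lemma cov_perm (R : realType) p n (Hloc : ('I_n.+1 -> p.-tuple R) -> p.-tuple R -> p.-tuple R -> R)
  (hHsym : forall (s : 'I_n.+1 -> 'I_n.+1) (xs : 'I_n.+1 -> p.-tuple R),
      bijective s -> Hloc (xs \o s) = Hloc xs)
  (hH01 : forall xs a b, 0 <= Hloc xs a b <= 1)
  (s : {perm 'I_n.+1}) xs (vs : 'I_n.+1 -> R) a :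
  coverage Hloc (xs \o s) (vs \o s) a ((vs \o s) ord_max) = coverage Hloc xs vs a (vs ord_max).
Proof.
rewrite !cov_full //; congr (_ * _).
rewrite [RHS](reindex_inj (@perm_inj _ s)) /=.
by apply: eq_bigr => i _; rewrite (Sf_perm hHsym).
Qed.

Lemma Gamma_sub (R : realType) p n (Hloc : ('I_n.+1 -> p.-tuple R) -> p.-tuple R -> p.-tuple R -> R)
  (hHsym : forall (s : 'I_n.+1 -> 'I_n.+1) (xs : 'I_n.+1 -> p.-tuple R),
      bijective s -> Hloc (xs \o s) = Hloc xs)
  (s : {perm 'I_n.+1}) xs a : Gamma Hloc (xs \o s) a -> Gamma Hloc xs a.
Proof.
move=> [i [I ->]]; exists (s i), (imset s (mem I)).
rewrite big_imset /=; last by move=> x y _ _; exact: perm_inj.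
by apply: eq_bigr => k _; rewrite (pH_perm hHsym).
Qed.

Lemma Gamma_perm (R : realType) p n (Hloc : ('I_n.+1 -> p.-tuple R) -> p.-tuple R -> p.-tuple R -> R)
  (hHsym : forall (s : 'I_n.+1 -> 'I_n.+1) (xs : 'I_n.+1 -> p.-tuple R),
      bijective s -> Hloc (xs \o s) = Hloc xs)
  (s : {perm 'I_n.+1}) xs : Gamma Hloc (xs \o s) = Gamma Hloc xs.
Proof.
apply/seteqP; split => a; first exact: Gamma_sub.
move=> h; apply: (@Gamma_sub _ _ _ _ hHsym (s^-1)%g).
by have -> : (xs \o s) \o (s^-1)%g = xs by apply: funext => i /=; rewrite permKV.
Qed.

Lemma at_perm (R : realType) p n (Hloc : ('I_n.+1 -> p.-tuple R) -> p.-tuple R -> p.-tuple R -> R)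
  (hHsym : forall (s : 'I_n.+1 -> 'I_n.+1) (xs : 'I_n.+1 -> p.-tuple R),
      bijective s -> Hloc (xs \o s) = Hloc xs)
  (hH01 : forall xs a b, 0 <= Hloc xs a b <= 1)
  (s : {perm 'I_n.+1}) xs (vs : 'I_n.+1 -> R) alpha :
  alpha_tilde Hloc (xs \o s) (vs \o s) alpha ((vs \o s) ord_max) =
  alpha_tilde Hloc xs vs alpha (vs ord_max).
Proof.
rewrite /alpha_tilde (Gamma_perm hHsym); congr (inf _); apply: funext => a /=.
by rewrite (cov_perm hHsym hH01).
Qed.

Lemma count_ge (R : realType) p n (Hloc : ('I_n.+1 -> p.-tuple R) -> p.-tuple R -> p.-tuple R -> R)
  (hH01 : forall xs a b, 0 <= Hloc xs a b <= 1) (hH1 : forall xs a, Hloc xs a a = 1)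
  alpha (ha : alpha < 1) xs (vs : 'I_n.+1 -> R) :
  alpha * n.+1%:R <= \sum_(i < n.+1)
    (if Sf Hloc xs vs i < alpha_tilde Hloc xs vs alpha (vs ord_max) then 1 else 0).
Proof.
have [k [-> [c _]]] := at_char hH01 hH1 ha xs vs.
move: c; rewrite cov_full // => c.
have N0 : 0 < n.+1%:R :> R by rewrite ltr0n.
rewrite mulrC -ler_pdivlMl //.
Qed.
Lemma measurable_invR (R: realType) : measurable_fun [set: R] (@GRing.inv R).
Proof.
rewrite -(setUv [set (0:R)]).
apply/measurable_funU => //; first exact: measurableC.
split; first exact: measurable_fun_set1.
apply: open_continuous_measurable_fun.
  by apply: closed_openC; exact: closed_eq.
move=> x /set_mem /eqP x0; exact: inv_continuous.
Qed.

Definition xst (R : realType) p n (t : n.+1.-tuple (p.-tuple R * R)) : 'I_n.+1 -> p.-tuple R :=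
  fun i => (tnth t i).1.
Definition vst (R : realType) p n (V : p.-tuple R * R -> R) (t : n.+1.-tuple (p.-tuple R * R)) :
  'I_n.+1 -> R := fun i => V (tnth t i).

Lemma m_xst (R : realType) p n (i : 'I_n.+1) :
  measurable_fun setT (fun t : n.+1.-tuple (p.-tuple R * R) => xst t i).
Proof. by apply: measurableT_comp; [exact: measurable_fst | exact: measurable_tnth]. Qed.

Lemma m_vst (R : realType) p n (V : p.-tuple R * R -> R) (hV : measurable_fun setT V) (i : 'I_n.+1) :
  measurable_fun setT (fun t : n.+1.-tuple (p.-tuple R * R) => vst V t i).
Proof. by apply: measurableT_comp; [exact: hV | exact: measurable_tnth]. Qed.

Lemma m_tupx (R : realType) p n :
  measurable_fun setT (fun t : n.+1.-tuple (p.-tuple R * R) => [tuple xst t k | k < n.+1]).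
Proof.
apply/measurable_fun_tnthP => i.
rewrite (_ : _ \o _ = (fun t => xst t i)); first exact: m_xst.
by apply: funext => t /=; rewrite tnth_mktuple.
Qed.

Lemma m_Hmat (R : realType) p n (Hloc : ('I_n.+1 -> p.-tuple R) -> p.-tuple R -> p.-tuple R -> R)
  (hHmeas : measurable_fun setT
     (fun t : n.+1.-tuple (p.-tuple R) * (p.-tuple R * p.-tuple R) =>
        Hloc (tnth t.1) t.2.1 t.2.2)) i j :
  measurable_fun setT (fun t : n.+1.-tuple (p.-tuple R * R) => Hmat Hloc (xst t) i j).
Proof.
have -> : (fun t : n.+1.-tuple (p.-tuple R * R) => Hmat Hloc (xst t) i j) =
  (fun t : n.+1.-tuple (p.-tuple R) * (p.-tuple R * p.-tuple R) => Hloc (tnth t.1) t.2.1 t.2.2)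
  \o (fun t => ([tuple xst t k | k < n.+1], (xst t i, xst t j))).
  apply: funext => t /=; rewrite /Hmat.
  by have -> : tnth [tuple xst t k | k < n.+1] = xst t by apply: funext => k; rewrite tnth_mktuple.
apply: (measurableT_comp hHmeas).
apply: measurable_fun_pair; first exact: m_tupx.
by apply: measurable_fun_pair; exact: m_xst.
Qed.

Lemma m_pH (R : realType) p n (Hloc : ('I_n.+1 -> p.-tuple R) -> p.-tuple R -> p.-tuple R -> R)
  (hHmeas : measurable_fun setT
     (fun t : n.+1.-tuple (p.-tuple R) * (p.-tuple R * p.-tuple R) =>
        Hloc (tnth t.1) t.2.1 t.2.2)) i j :
  measurable_fun setT (fun t : n.+1.-tuple (p.-tuple R * R) => pH Hloc (xst t) i j).
Proof.
rewrite /pH.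
have hs : measurable_fun setT (fun t : n.+1.-tuple (p.-tuple R * R) =>
    \sum_(k < n.+1) Hmat Hloc (xst t) i k).
  by apply: measurable_sum => k; exact: m_Hmat.
have := measurable_funM (m_Hmat hHmeas i j) (measurableT_comp (@measurable_invR R) hs).
by apply: eq_measurable_fun => t _.
Qed.

Lemma m_Sf (R : realType) p n (Hloc : ('I_n.+1 -> p.-tuple R) -> p.-tuple R -> p.-tuple R -> R)
  (hHmeas : measurable_fun setT
     (fun t : n.+1.-tuple (p.-tuple R) * (p.-tuple R * p.-tuple R) =>
        Hloc (tnth t.1) t.2.1 t.2.2))
  (V : p.-tuple R * R -> R) (hV : measurable_fun setT V) i :
  measurable_fun setT (fun t : n.+1.-tuple (p.-tuple R * R) => Sf Hloc (xst t) (vst V t) i).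
Proof.
rewrite /Sf; under eq_fun do rewrite big_mkcond /=.
apply: measurable_sum => j; apply: measurable_fun_ifT.
- by apply: measurable_fun_ltr; exact: m_vst.
- exact: m_pH.
- exact: measurable_cst.
Qed.

Lemma m_gfun (R : realType) p n (Hloc : ('I_n.+1 -> p.-tuple R) -> p.-tuple R -> p.-tuple R -> R)
  (hHmeas : measurable_fun setT
     (fun t : n.+1.-tuple (p.-tuple R) * (p.-tuple R * p.-tuple R) =>
        Hloc (tnth t.1) t.2.1 t.2.2)) k :
  measurable_fun setT (fun t : n.+1.-tuple (p.-tuple R * R) => gfun Hloc (xst t) k).
Proof.
rewrite /gfun; under eq_fun do rewrite big_mkcond /=.
apply: measurable_sum => j; case: (j \in k.2).
- exact: m_pH.
- exact: measurable_cst.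
Qed.

Lemma m_cov (R : realType) p n (Hloc : ('I_n.+1 -> p.-tuple R) -> p.-tuple R -> p.-tuple R -> R)
  (hH01 : forall xs a b, 0 <= Hloc xs a b <= 1)
  (hHmeas : measurable_fun setT
     (fun t : n.+1.-tuple (p.-tuple R) * (p.-tuple R * p.-tuple R) =>
        Hloc (tnth t.1) t.2.1 t.2.2))
  (V : p.-tuple R * R -> R) (hV : measurable_fun setT V) k :
  measurable_fun setT (fun t : n.+1.-tuple (p.-tuple R * R) =>
    coverage Hloc (xst t) (vst V t) (gfun Hloc (xst t) k) (vst V t ord_max)).
Proof.
under eq_fun do rewrite cov_full //.
apply: measurable_funM; first exact: measurable_cst.
apply: measurable_sum => i; apply: measurable_fun_ifT.
- by apply: measurable_fun_ltr; [exact: m_Sf | exact: m_gfun].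
- exact: measurable_cst.
- exact: measurable_cst.
Qed.

Lemma m_boolset d (U : measurableType d) (f : U -> bool) :
  measurable_fun setT f -> measurable [set t | f t].
Proof.
move=> mf; have := mf measurableT [set true] I; rewrite setTI.
by congr measurable; apply/seteqP; split => t /=.
Qed.
Definition Evset (R : realType) p n (Hloc : ('I_n.+1 -> p.-tuple R) -> p.-tuple R -> p.-tuple R -> R)
  (V : p.-tuple R * R -> R) (alpha : R) : set (n.+1.-tuple (p.-tuple R * R)) :=
  [set t | Sf Hloc (xst t) (vst V t) ord_max <
           alpha_tilde Hloc (xst t) (vst V t) alpha (vst V t ord_max)].

Lemma Evset_meas (R : realType) p n (Hloc : ('I_n.+1 -> p.-tuple R) -> p.-tuple R -> p.-tuple R -> R)
  (hH01 : forall xs a b, 0 <= Hloc xs a b <= 1) (hH1 : forall xs a, Hloc xs a a = 1)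
  (hHmeas : measurable_fun setT
     (fun t : n.+1.-tuple (p.-tuple R) * (p.-tuple R * p.-tuple R) =>
        Hloc (tnth t.1) t.2.1 t.2.2))
  (V : p.-tuple R * R -> R) (hV : measurable_fun setT V) alpha (ha : alpha < 1) :
  measurable (Evset Hloc V alpha).
Proof.
have -> : Evset Hloc V alpha = \bigcap_(k in [set: ('I_n.+1 * {set 'I_n.+1})%type])
   (~` [set t | alpha <= coverage Hloc (xst t) (vst V t) (gfun Hloc (xst t) k) (vst V t ord_max)]
    `|` [set t | Sf Hloc (xst t) (vst V t) ord_max < gfun Hloc (xst t) k]).
  apply/seteqP; split => t /=.
  - move=> h k _; have [k0 [ea [c m]]] := at_char hH01 hH1 ha (xst t) (vst V t).
    rewrite /Evset /= ea in h.
    have [ck|nck] := boolP (alpha <= coverage Hloc (xst t) (vst V t) (gfun Hloc (xst t) k) (vst V t ord_max)).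
      by right; exact: lt_le_trans h (m k ck).
    by left => ck; rewrite ck in nck.
  - move=> h; have [k0 [ea [c _]]] := at_char hH01 hH1 ha (xst t) (vst V t).
    rewrite /Evset /= ea; case: (h k0 I) => //.
apply: fin_bigcap_measurable; first exact: finite_finset.
move=> k _; apply: measurableU.
- apply: measurableC; apply: m_boolset; apply: measurable_fun_ler.
    exact: measurable_cst.
  exact: m_cov.
- apply: m_boolset; apply: measurable_fun_ltr; [exact: m_Sf | exact: m_gfun].
Qed.

Definition permt (T : Type) n (s : {perm 'I_n.+1}) (t : n.+1.-tuple T) : n.+1.-tuple T :=
  [tuple tnth t (s i) | i < n.+1].

Lemma m_permt d (T : measurableType d) n (s : {perm 'I_n.+1}) :
  measurable_fun setT (@permt T n s).
Proof.
apply/measurable_fun_tnthP => i.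
rewrite (_ : _ \o _ = (fun t => tnth t (s i))); first exact: measurable_tnth.
by apply: funext => t /=; rewrite tnth_mktuple.
Qed.

Lemma Ev_permt (R : realType) p n (Hloc : ('I_n.+1 -> p.-tuple R) -> p.-tuple R -> p.-tuple R -> R)
  (hHsym : forall (s : 'I_n.+1 -> 'I_n.+1) (xs : 'I_n.+1 -> p.-tuple R),
      bijective s -> Hloc (xs \o s) = Hloc xs)
  (hH01 : forall xs a b, 0 <= Hloc xs a b <= 1)
  (V : p.-tuple R * R -> R) alpha (s : {perm 'I_n.+1}) t :
  Evset Hloc V alpha (permt s t) <->
  Sf Hloc (xst t) (vst V t) (s ord_max) < alpha_tilde Hloc (xst t) (vst V t) alpha (vst V t ord_max).
Proof.
have ex : xst (permt s t) = xst t \o s by apply: funext => i; rewrite /xst tnth_mktuple.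
have ev : vst V (permt s t) = vst V t \o s by apply: funext => i; rewrite /vst tnth_mktuple.
rewrite /Evset /= ex ev (Sf_perm hHsym) (at_perm hHsym hH01).
by [].
Qed.
Definition rects d (T : measurableType d) m : set (set (m.-tuple T)) :=
  [set B | exists A : 'I_m -> set T, (forall i, measurable (A i)) /\
     B = [set t | forall i, A i (tnth t i)]].

Arguments rects {d} T m.

Lemma rects_gen d (T : measurableType d) m :
  (@measurable _ (m.-tuple T)) = <<s rects T m >>.
Proof.
apply/seteqP; split.
- apply: smallest_sub; first exact: smallest_sigma_algebra.
  elim/big_ind: _ => [|X Y hX hY|i _]; first exact: sub0set.
    by rewrite subUset; split.
  move=> B [A mA <-]; apply: sub_sigma_algebra.
  exists (fun j => if j == i then A else setT); split.
    by move=> j; case: (j == i).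
  apply/seteqP; split => t /=.
    by move=> [_ h] j; case: eqP => [->|].
  by move=> /(_ i); rewrite eqxx.
- apply: smallest_sub; first exact: sigma_algebra_measurable.
  move=> B [A [mA ->]].
  have -> : [set t : m.-tuple T | forall i, A i (tnth t i)] =
     \bigcap_(i in [set: 'I_m]) ((fun t => tnth t i) @^-1` A i).
    by apply/seteqP; split => t /= h i; [move=> _; exact: h | exact: h].
  apply: fin_bigcap_measurable; first exact: finite_finset.
  move=> i _; have := @measurable_tnth _ T m i measurableT (A i) (mA i).
  by rewrite setTI.
Qed.
Definition pushm d1 d2 (T1 : measurableType d1) (T2 : measurableType d2) (R : realType)
  (m : {measure set T1 -> \bar R}) (f : T1 -> T2) (mf : measurable_fun setT f) :
  set T2 -> \bar R := fun A => m (f @^-1` A).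

Lemma pushm0 d1 d2 (T1 : measurableType d1) (T2 : measurableType d2) (R : realType)
  (m : {measure set T1 -> \bar R}) (f : T1 -> T2) (mf : measurable_fun setT f) :
  pushm m mf set0 = 0%E.
Proof. by rewrite /pushm preimage_set0 measure0. Qed.

Lemma pushm_ge0 d1 d2 (T1 : measurableType d1) (T2 : measurableType d2) (R : realType)
  (m : {measure set T1 -> \bar R}) (f : T1 -> T2) (mf : measurable_fun setT f) A :
  (0 <= pushm m mf A)%E.
Proof. by apply: measure_ge0; rewrite -[X in measurable X]setIT; apply: mf. Qed.

Lemma pushm_sa d1 d2 (T1 : measurableType d1) (T2 : measurableType d2) (R : realType)
  (m : {measure set T1 -> \bar R}) (f : T1 -> T2) (mf : measurable_fun setT f) :
  semi_sigma_additive (pushm m mf).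
Proof.
move=> F mF tF mUF; rewrite /pushm preimage_bigcup.
apply: measure_semi_sigma_additive.
- by move=> n; rewrite -[X in measurable X]setTI; exact: mf.
- apply/trivIsetP => /= i j _ _ ij; rewrite -preimage_setI.
  by move/trivIsetP : tF => /(_ _ _ _ _ ij) ->//; rewrite preimage_set0.
- by rewrite -preimage_bigcup -[X in measurable X]setTI; exact: mf.
Qed.

HB.instance Definition _ d1 d2 (T1 : measurableType d1) (T2 : measurableType d2) (R : realType)
  (m : {measure set T1 -> \bar R}) (f : T1 -> T2) (mf : measurable_fun setT f) :=
  isMeasure.Build _ _ _ (pushm m mf) (@pushm0 d1 d2 T1 T2 R m f mf)
  (@pushm_ge0 d1 d2 T1 T2 R m f mf) (@pushm_sa d1 d2 T1 T2 R m f mf).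

Lemma law_eq d (Omega : measurableType d) (R : realType) (P : probability Omega R)
  dT (T : measurableType dT) m (Z1 Z2 : Omega -> m.-tuple T)
  (m1 : measurable_fun setT Z1) (m2 : measurable_fun setT Z2)
  (hrect : forall A : 'I_m -> set T, (forall i, measurable (A i)) ->
     P (Z1 @^-1` [set t | forall i, A i (tnth t i)]) =
     P (Z2 @^-1` [set t | forall i, A i (tnth t i)]))
  B : measurable B -> P (Z1 @^-1` B) = P (Z2 @^-1` B).
Proof.
move=> mB.
have setIG : setI_closed (rects T m).
  move=> B1 B2 [A1 [mA1 ->]] [A2 [mA2 ->]].
  exists (fun i => A1 i `&` A2 i); split; first by move=> i; exact: measurableI.
  apply/seteqP; split => t /=.
    by move=> [h1 h2] i; split.
  by move=> h; split => i; have [] := h i.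
have Gg : forall k : nat, rects T m setT.
  move=> _; exists (fun _ => setT); split => //.
  by apply/seteqP; split => t.
have gc : \bigcup_(k : nat) (setT : set (m.-tuple T)) = setT.
  by apply/seteqP; split => t // _; exists 0%N.
have m12 : forall A, rects T m A -> pushm P m1 A = pushm P m2 A.
  by move=> A [A' [mA' ->]]; exact: hrect.
have mgoo : forall k : nat, (pushm P m1 setT < +oo)%E.
  move=> _; rewrite /pushm preimage_setT.
  by apply: (le_lt_trans (probability_le1 P measurableT)); exact: ltry.
exact: (measure_unique (rects T m) (fun _ => setT) (rects_gen T m) setIG Gg gc
  (pushm P m1) (pushm P m2) m12 mgoo B mB).
Qed.
Lemma rect_perm d (Omega : measurableType d) (R : realType) (P : probability Omega R)
  dT (T : measurableType dT) m (Z : 'I_m.+1 -> Omega -> T) (hiid : iid_family P Z)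
  (s : {perm 'I_m.+1}) (A : 'I_m.+1 -> set T) (mA : forall i, measurable (A i)) :
  P ((fun w => [tuple Z i w | i < m.+1]) @^-1` [set t | forall i, A i (tnth t i)]) =
  P ((fun w => permt s [tuple Z i w | i < m.+1]) @^-1` [set t | forall i, A i (tnth t i)]).
Proof.
case: hiid => [mZ [hprod hid]].
have e1 : (fun w => [tuple Z i w | i < m.+1]) @^-1` [set t | forall i, A i (tnth t i)] =
    \bigcap_(i in setT) (Z i @^-1` A i).
  apply/seteqP; split => w /=.
    by move=> h i _; move: (h i); rewrite tnth_mktuple.
  by move=> h i; rewrite tnth_mktuple; exact: h.
have e2 : (fun w => permt s [tuple Z i w | i < m.+1]) @^-1` [set t | forall i, A i (tnth t i)] =
    \bigcap_(i in setT) (Z i @^-1` A ((s^-1)%g i)).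
  apply/seteqP; split => w /=.
    by move=> h i _; move: (h ((s^-1)%g i)); rewrite !tnth_mktuple permKV.
  by move=> h i; rewrite !tnth_mktuple; have := h (s i) I; rewrite permK.
rewrite e1 e2 !hprod //.
rewrite [RHS](reindex_inj (@perm_inj _ s)) /=.
by apply: eq_bigr => i _; rewrite permK; exact: hid.
Qed.

Unset Implicit Arguments.

Theorem lemma1 (R : realType) (d : measure_display) (Omega : measurableType d)
  (P : probability Omega R) (p n : nat)
  (X : 'I_n.+1 -> Omega -> p.-tuple R) (Y : 'I_n.+1 -> Omega -> R)
  (hiid : iid_family P (fun i w => (X i w, Y i w)))
  (V : p.-tuple R * R -> R) (hV : measurable_fun setT V)
  (Hloc : ('I_n.+1 -> p.-tuple R) -> p.-tuple R -> p.-tuple R -> R)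
  (hHsym : forall (s : 'I_n.+1 -> 'I_n.+1) (xs : 'I_n.+1 -> p.-tuple R),
      bijective s -> Hloc (xs \o s) = Hloc xs)
  (hH01 : forall xs a b, 0 <= Hloc xs a b <= 1)
  (hH1 : forall xs a, Hloc xs a a = 1)
  (hHmeas : measurable_fun setT
     (fun t : n.+1.-tuple (p.-tuple R) * (p.-tuple R * p.-tuple R) =>
        Hloc (tnth t.1) t.2.1 t.2.2))
  (alpha : R) (halpha : 0 < alpha < 1) :
  let xs := fun w i => X i w in
  let Vs := fun w i => V (X i w, Y i w) in
  (forall w, is_interval (C_V Hloc (xs w) (Vs w) alpha)) /\
  (alpha%:E <= P [set w | C_V Hloc (xs w) (Vs w) alpha (Vs w ord_max)])%E /\
  (alpha%:E <= P [set w | C_Y Hloc V (xs w) (Vs w) alpha (Y ord_max w)])%E.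
Proof.
move=> xs Vs.
have /andP[ha0 ha1] := halpha.
split; first by move=> w; exact: (CV_interval hH01 hH1 ha1).
pose Z := fun i w => (X i w, Y i w).
pose Zt := fun w => [tuple Z i w | i < n.+1].
have mZt : measurable_fun setT Zt.
  apply/measurable_fun_tnthP => i.
  rewrite (_ : _ \o _ = Z i); first exact: (hiid.1 i).
  by apply: funext => w /=; rewrite tnth_mktuple.
have exs : forall w, xs w = xst (Zt w).
  by move=> w; apply: funext => i; rewrite /xst tnth_mktuple.
have evs : forall w, Vs w = vst V (Zt w).
  by move=> w; apply: funext => i; rewrite /vst tnth_mktuple.
set E := Evset Hloc V alpha.
have mE : measurable E := Evset_meas hH01 hH1 hHmeas hV ha1.
have Eeq : [set w | C_V Hloc (xs w) (Vs w) alpha (Vs w ord_max)] = Zt @^-1` E.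
  apply/seteqP; split => w /=; rewrite exs evs.
  - by move/(CV_full hH01).
  - by move=> h; apply/(CV_full hH01).
suff main : (alpha%:E <= P (Zt @^-1` E))%E.
  rewrite (_ : [set w | C_Y Hloc V (xs w) (Vs w) alpha (Y ord_max w)] =
               [set w | C_V Hloc (xs w) (Vs w) alpha (Vs w ord_max)]) //.
  by rewrite Eeq.
pose A := fun i : 'I_n.+1 => (permt (tperm i ord_max) \o Zt) @^-1` E.
have mA : forall i, measurable (A i).
  move=> i; have := (measurableT_comp (m_permt (tperm i ord_max)) mZt) measurableT E mE.
  by rewrite setTI.
have PA : forall i, P (A i) = P (Zt @^-1` E).
  move=> i; symmetry.
  apply: (law_eq (P:=P) mZt (measurableT_comp (m_permt (tperm i ord_max)) mZt) _ mE).
  move=> B mB; exact: (rect_perm hiid).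
have Aind : forall i w, \1_(A i) w = (if Sf Hloc (xst (Zt w)) (vst V (Zt w)) i <
    alpha_tilde Hloc (xst (Zt w)) (vst V (Zt w)) alpha (vst V (Zt w) ord_max) then 1 else 0 : R).
  move=> i w; have h := Ev_permt hHsym hH01 V alpha (tperm i ord_max) (Zt w).
  rewrite tpermR in h.
  rewrite indicE; case: ifP => c.
    by rewrite mem_set //; apply/h.
  by rewrite memNset // => /h; rewrite c.
have cnt : forall w, alpha * n.+1%:R <= \sum_(i < n.+1) (\1_(A i) w : R).
  move=> w; under eq_bigr do rewrite Aind.
  exact: (count_ge hH01 hH1 ha1).
have mI : forall i : 'I_n.+1, measurable_fun setT (fun w => (\1_(A i) w : R)%:E).
  by move=> i; apply: (proj2 (@measurable_EFinP _ _ R setT (\1_(A i) : Omega -> R))); exact: measurable_indic.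
have S1 : (\sum_(i < n.+1) P (A i) = \int[P]_w (\sum_(i < n.+1) (\1_(A i) w : R)%:E))%E.
  rewrite ge0_integral_sum //.
  by apply: eq_bigr => i _; rewrite integral_indic // setIT.
have S2 : (\int[P]_w ((alpha * n.+1%:R)%:E) <= \int[P]_w (\sum_(i < n.+1) (\1_(A i) w : R)%:E))%E.
  apply: ge0_le_integral => //.
  all: try by move=> w _; rewrite lee_fin; apply: mulr_ge0; [exact: ltW | exact: ler0n].
  all: try exact: measurable_cst.
  - under eq_fun do rewrite sumEFin.
    apply: (proj2 (@measurable_EFinP _ _ R setT (fun w => \sum_(i < n.+1) (\1_(A i) w : R)))).
    by apply: measurable_sum => i; exact: measurable_indic.
  - by move=> w _; rewrite sumEFin lee_fin; exact: cnt.
have S3 : (\int[P]_w ((alpha * n.+1%:R)%:E) = (alpha * n.+1%:R)%:E)%E.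
  have -> := integral_cst P measurableT (alpha * n.+1%:R)%:E.
  transitivity ((alpha * n.+1%:R)%:E * 1)%E; last exact: mule1.
  by congr (_ * _)%E; exact: probability_setT.
have mZE : measurable (Zt @^-1` E) by have := mZt measurableT E mE; rewrite setTI.
have q_fin : P (Zt @^-1` E) \is a fin_num.
  rewrite ge0_fin_numE; last exact: measure_ge0.
  by apply: (le_lt_trans (probability_le1 P mZE)); exact: ltry.
have S4 : (\sum_(i < n.+1) P (A i) = (fine (P (Zt @^-1` E)) * n.+1%:R)%:E)%E.
  rewrite (eq_bigr (fun _ => (fine (P (Zt @^-1` E)))%:E)); last first.
    by move=> i _; rewrite PA fineK.
  by rewrite sumEFin sumr_const card_ord mulr_natr.
have H : ((alpha * n.+1%:R)%:E <= (fine (P (Zt @^-1` E)) * n.+1%:R)%:E)%E.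
  by rewrite -S4 S1 -S3; exact: S2.
rewrite lee_fin ler_pM2r ?ltr0n // in H.
by rewrite -(fineK q_fin) lee_fin.
Qed.
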